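(* Let $(A,\mu,\alpha,\beta)$ be a BiHom-associative algebra (with $\mu(a\otimes b)=a\cdot b$) and let $r=\sum_i x_i\otimes y_i\in A\otimes A$ satisfy $(\alpha\otimes\alpha)(r)=r=(\beta\otimes\beta)(r)$. Define $\Delta_r:A\to A\otimes A$ by $\Delta_r(a)=\sum_i\alpha(x_i)\otimes y_i\cdot a-\sum_i a\cdot x_i\otimes\beta(y_i)$. Then $(\alpha\otimes\alpha)\circ\Delta_r=\Delta_r\circ\alpha$, $(\beta\otimes\beta)\circ\Delta_r=\Delta_r\circ\beta$, and, writing $\Delta_r(a)=a_1\otimes a_2$, for all $a,b\in A$: \[ \Delta_r(a\cdot b)=\alpha(a)\cdot b_1\otimes\beta(b_2)+\alpha(a_1)\otimes a_2\cdot\beta(b). \]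
   Context: Work over a field. A BiHom-associative algebra is a 4-tuple $(A,\mu,\alpha,\beta)$ with $\alpha,\beta:A\to A$ commuting linear maps, multiplicative for $\mu$, and $\alpha(x)\cdot(y\cdot z)=(x\cdot y)\cdot\beta(z)$ for all $x,y,z$. *)

(* Defs.v *)
From mathcomp Require Import all_boot all_algebra.
Set Implicit Arguments. Unset Strict Implicit. Unset Printing Implicit Defensive.
Import GRing.Theory.
Local Open Scope ring_scope.

Definition bilinear_map (K : fieldType) (U V W : lmodType K) (f : U -> V -> W) : Prop :=
  (forall v, linear (fun u => f u v)) /\ (forall u, linear (f u)).

Definition BiHomAssoc (K : fieldType) (A : lmodType K)
    (mu : A -> A -> A) (alpha beta : A -> A) : Prop :=
  bilinear_map mu /\ linear alpha /\ linear beta /\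
  (forall x, alpha (beta x) = beta (alpha x)) /\
  (forall x y, alpha (mu x y) = mu (alpha x) (alpha y)) /\
  (forall x y, beta (mu x y) = mu (beta x) (beta y)) /\
  (forall x y z, mu (alpha x) (mu y z) = mu (mu x y) (beta z)).

(* Elements of A (x) A are represented by finite formal sums
   sum_i x_i (x) y_i, i.e. lists of pairs; two such represent the same
   tensor iff they agree under every bilinear map into every K-vector
   space (universal property of the tensor product). *)
Definition tensor (K : fieldType) (A : lmodType K) := seq (A * A).

Definition teq (K : fieldType) (A : lmodType K) (s t : tensor A) : Prop :=
  forall (V : lmodType K) (f : A -> A -> V), bilinear_map f ->
    \sum_(p <- s) f p.1 p.2 = \sum_(p <- t) f p.1 p.2.

Definition tmap (K : fieldType) (A : lmodType K) (f g : A -> A) (s : tensor A)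
  : tensor A := [seq (f p.1, g p.2) | p <- s].

Definition Delta_r (K : fieldType) (A : lmodType K)
    (mu : A -> A -> A) (alpha beta : A -> A) (r : tensor A) (a : A) : tensor A :=
  [seq (alpha p.1, mu p.2 a) | p <- r] ++ [seq (- mu a p.1, beta p.2) | p <- r].

(* Main.v *)
Require Import Defs.
From mathcomp Require Import all_boot all_algebra.
Set Implicit Arguments. Unset Strict Implicit. Unset Printing Implicit Defensive.
Import GRing.Theory.
Local Open Scope ring_scope.

Section Aux.
Variable (K : fieldType).

Lemma linD (U V : lmodType K) (f : U -> V) : linear f -> forall u v, f (u + v) = f u + f v.
Proof. by move=> lf u v; case: (GRing.semilinear_linear lf) => _ ->. Qed.

Lemma linN (U V : lmodType K) (f : U -> V) : linear f -> forall u, f (- u) = - f u.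
Proof.
move=> lf u; case: (GRing.semilinear_linear lf) => sf _.
by rewrite -[- u]scaleN1r sf /= scaleN1r.
Qed.

Lemma lin_comp (U V W : lmodType K) (f : V -> W) (g : U -> V) :
  linear f -> linear g -> linear (fun u => f (g u)).
Proof. by move=> lf lg a u v; rewrite lg lf. Qed.

Lemma bil_comp (U V W : lmodType K) (f : U -> U -> W) (phi psi : V -> U) :
  bilinear_map f -> linear phi -> linear psi ->
  bilinear_map (fun u v => f (phi u) (psi v)).
Proof.
move=> [f1 f2] lp lq; split=> w.
  exact: (lin_comp (f1 (psi w)) lp).
exact: (lin_comp (f2 (phi w)) lq).
Qed.

End Aux.

Theorem proposition5p2 (K : fieldType) (A : lmodType K)
    (mu : A -> A -> A) (alpha beta : A -> A) (r : tensor A) :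
  BiHomAssoc mu alpha beta ->
  teq (tmap alpha alpha r) r -> teq (tmap beta beta r) r ->
  [/\ (forall a, teq (tmap alpha alpha (Delta_r mu alpha beta r a))
                     (Delta_r mu alpha beta r (alpha a))),
      (forall a, teq (tmap beta beta (Delta_r mu alpha beta r a))
                     (Delta_r mu alpha beta r (beta a))) &
      (forall a b, teq (Delta_r mu alpha beta r (mu a b))
         ([seq (mu (alpha a) p.1, beta p.2) | p <- Delta_r mu alpha beta r b]
          ++ [seq (alpha p.1, mu p.2 (beta b)) | p <- Delta_r mu alpha beta r a]))].
Proof.
move=> [[mu1 mu2] [la [lb [ab [am [bm ass]]]]]] Ha Hb.
have invA : forall (V : lmodType K) (g : A -> A -> V), bilinear_map g ->
   \sum_(p <- r) g (alpha p.1) (alpha p.2) = \sum_(p <- r) g p.1 p.2.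
  by move=> V g gb; rewrite -(Ha V g gb) big_map.
have invB : forall (V : lmodType K) (g : A -> A -> V), bilinear_map g ->
   \sum_(p <- r) g (beta p.1) (beta p.2) = \sum_(p <- r) g p.1 p.2.
  by move=> V g gb; rewrite -(Hb V g gb) big_map.
have lid : linear (fun x : A => x) by [].
have fN : forall (V : lmodType K) (f : A -> A -> V), bilinear_map f ->
  forall u v, f (- u) v = - f u v.
  by move=> V f [f1 f2] u v; exact: (linN (f1 v)).
split.
- move=> a V f fb; rewrite /Delta_r /tmap map_cat !big_cat !big_map /=.
  congr (_ + _).
    rewrite -(invA _ (fun u v => f (alpha u) (mu v (alpha a))) ltac:(exact: bil_comp fb la (mu1 (alpha a)))).
      by apply: eq_bigr => p _; rewrite am.
  under eq_bigr do rewrite (linN la) fN // am ab.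
  under [RHS]eq_bigr do rewrite fN //.
  rewrite !sumrN; congr (- _).
  rewrite -(invA _ (fun u v => f (mu (alpha a) u) (beta v)) ltac:(exact: bil_comp fb (mu2 (alpha a)) lb)).
    by [].
- move=> a V f fb; rewrite /Delta_r /tmap map_cat !big_cat !big_map /=.
  congr (_ + _).
    rewrite -(invB _ (fun u v => f (alpha u) (mu v (beta a))) ltac:(exact: bil_comp fb la (mu1 (beta a)))).
      by apply: eq_bigr => p _; rewrite bm -ab.
  under eq_bigr do rewrite (linN lb) fN // bm.
  under [RHS]eq_bigr do rewrite fN //.
  rewrite !sumrN; congr (- _).
  rewrite -(invB _ (fun u v => f (mu (beta a) u) (beta v)) ltac:(exact: bil_comp fb (mu2 (beta a)) lb)).
    by [].
- move=> a b V f fb; rewrite /Delta_r !map_cat !big_cat !big_map /=.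
  under [X in _ = X + _ + _]eq_bigr do rewrite bm.
  under [X in _ = _ + X + _]eq_bigr do rewrite (linN (mu2 (alpha a))) fN // ass.
  under [X in _ = _ + _ + (_ + X)]eq_bigr do rewrite (linN la) fN // am -bm.
  under [X in _ = _ + _ + (X + _)]eq_bigr do rewrite -ass.
  under [X in _ + X = _]eq_bigr do rewrite fN //.
  rewrite !sumrN.
  set S1 := \sum_(p <- r) f (mu (alpha a) (alpha p.1)) (beta (mu p.2 b)).
  set S2 := \sum_(p <- r) f (mu (mu a b) (beta p.1)) (beta (beta p.2)).
  set S3 := \sum_(p <- r) f (alpha (alpha p.1)) (mu (alpha p.2) (mu a b)).
  have -> : \sum_(p <- r) f (alpha p.1) (mu p.2 (mu a b)) = S3.
    rewrite -(invA _ (fun u v => f (alpha u) (mu v (mu a b))) ltac:(exact: bil_comp fb la (mu1 (mu a b)))).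
      by [].
  have -> : \sum_(p <- r) f (mu (mu a b) p.1) (beta p.2) = S2.
    rewrite -(invB _ (fun u v => f (mu (mu a b) u) (beta v)) ltac:(exact: bil_comp fb (mu2 (mu a b)) lb)).
      by [].
  have -> : \sum_(p <- r) f (mu (alpha a) (alpha p.1)) (mu (beta p.2) (beta b)) = S1.
    by apply: eq_bigr => p _; rewrite bm.
  by rewrite [RHS]addrC addrA subrK.
Qed.
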